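(* Let $\{(x_i,u_i)\}_{i=1}^N$, $\hat u_\theta$, $\ell$, $\mathcal L(\theta)=\frac1N\sum_{i=1}^N\ell(\hat u_\theta(x_i),u_i)$ and $\hat u_X$ be as in the context, and assume $\ell$ satisfies the optimal stationarity condition. Assume $\|\nabla_\theta\mathcal L(\theta)-\nabla_\theta\mathcal L(\theta')\|\le L\|\theta-\theta'\|$ for all $\theta,\theta'\in\mathbb R^{D_\theta}$ and some $L\ge0$. Let $\{\theta^{(r)}\}_{r\ge0}$ be defined by $\theta^{(r+1)}=\theta^{(r)}-\epsilon^{(r)}\bar g^{(r)}$ from an initial $\theta^{(0)}$, where there exist constants $\bar c,\underline c>0$ such that for every $r\ge0$: $\underline c\,\|\nabla_\theta\mathcal L(\theta^{(r)})\|^2\le\nabla_\theta\mathcal L(\theta^{(r)})^\top\bar g^{(r)}$ and $\|\bar g^{(r)}\|^2\le\bar c\,\|\nabla_\theta\mathcal L(\theta^{(r)})\|^2$. Suppose the learning rates satisfy either (i) $\zeta\le\epsilon^{(r)}\le\frac{\underline c(2-\zeta)}{L\bar c}$ for all $r$, for some $\zeta>0$, or (ii) $\lim_{r\to\infty}\epsilon^{(r)}=0$ and $\sum_{r=0}^\infty\epsilon^{(r)}=\infty$. Then every limit point $\theta$ of $\{\theta^{(r)}\}_r$ with $\operatorname{rank}\big(\frac{\partial\hat u_X(\theta)}{\partial\theta}\big)=ND_u$ is a global minimum of $\mathcal L$.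
   Context: Setting: dataset $\{(x_i,u_i)\}_{i=1}^N$ with $x_i\in\mathcal X\subseteq\mathbb R^{D_x}$, $u_i\in\mathcal U\subseteq\mathbb R^{D_u}$; model $\hat u_\theta(x)\in\mathbb R^{D_u}$, $\theta\in\mathbb R^{D_\theta}$, with $\theta\mapsto\hat u_\theta(x_i)$ differentiable for each $i$; loss $\ell:\mathbb R^{D_u}\times\mathcal U\to\mathbb R_{\ge0}$. $\hat u_X(\theta)=\operatorname{vec}\big((\hat u_\theta(x_1),\dots,\hat u_\theta(x_N))\big)\in\mathbb R^{ND_u}$, with Jacobian $\frac{\partial\hat u_X(\theta)}{\partial\theta}\in\mathbb R^{ND_u\times D_\theta}$. Definition (optimal stationarity condition): $\ell$ satisfies it if for all $u\in\mathcal U$ and $q\in\mathbb R^{D_u}$ the gradient $\nabla_q\ell(q,u)$ exists, and $\nabla_q\ell(q,u)=0$ implies $\ell(q,u)\le\ell(q',u)$ for all $q'\in\mathbb R^{D_u}$. *)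

(* Defs.v *)
From HB Require Import structures.
From mathcomp Require Import all_boot all_order all_algebra.
From mathcomp Require Import all_classical all_reals all_analysis.
Set Implicit Arguments. Unset Strict Implicit. Unset Printing Implicit Defensive.
Import Order.TTheory GRing.Theory Num.Theory.
Import numFieldNormedType.Exports.
Local Open Scope ring_scope.
Local Open Scope classical_set_scope.

Section Defs.
Variable R : realType.

Definition dotv n (a b : 'rV[R]_n) : R := \sum_(j < n) a 0 j * b 0 j.
Definition enorm n (a : 'rV[R]_n) : R := Num.sqrt (dotv a a).

Definition grad n (f : 'rV[R]_n -> R) (p : 'rV[R]_n) : 'rV[R]_n :=
  \row_(j < n) ('d f p) (delta_mx 0 j).

Definition optimal_stationarity Du (U : set 'rV[R]_Du)
    (ell : 'rV[R]_Du -> 'rV[R]_Du -> R) : Prop :=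
  forall u, U u -> forall q : 'rV[R]_Du,
    differentiable (fun q' => ell q' u) q /\
    (grad (fun q' => ell q' u) q = 0 ->
       forall q' : 'rV[R]_Du, ell q u <= ell q' u).

Definition emp_loss N Dx Du Dth (xs : 'I_N -> 'rV[R]_Dx) (us : 'I_N -> 'rV[R]_Du)
    (uhat : 'rV[R]_Dth -> 'rV[R]_Dx -> 'rV[R]_Du)
    (ell : 'rV[R]_Du -> 'rV[R]_Du -> R) (th : 'rV[R]_Dth) : R :=
  N%:R^-1 * \sum_(i < N) ell (uhat th (xs i)) (us i).

Definition uX N Dx Du Dth (xs : 'I_N -> 'rV[R]_Dx)
    (uhat : 'rV[R]_Dth -> 'rV[R]_Dx -> 'rV[R]_Du) (th : 'rV[R]_Dth)
    : 'rV[R]_(N * Du) :=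
  mxvec (\matrix_(i < N, j < Du) uhat th (xs i) 0 j).

(* Jacobian of f : R^n -> R^m as an m x n matrix (paper's convention);
   the library's 'J f p is its transpose. *)
Definition jac n m (f : 'rV[R]_n -> 'rV[R]_m) (p : 'rV[R]_n) : 'M[R]_(m, n) :=
  (jacobian f p)^T.

End Defs.

(* Main.v *)
Require Import Defs.
From HB Require Import structures.
From mathcomp Require Import all_boot all_order all_algebra.
From mathcomp Require Import all_classical all_reals all_analysis.
From mathcomp Require Import ring lra.
Import Order.TTheory GRing.Theory Num.Theory.
Import numFieldNormedType.Exports.
Local Open Scope ring_scope.
Local Open Scope classical_set_scope.



Section Aux.
Variable R : realType.
Variable n : nat.
Implicit Types a b v w : 'rV[R]_n.

Lemma dotvC a b : dotv a b = dotv b a.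
Proof. by rewrite /dotv; apply: eq_bigr => j _; rewrite mulrC. Qed.

Lemma dotvDl a b v : dotv (a + b) v = dotv a v + dotv b v.
Proof. by rewrite /dotv -big_split; apply: eq_bigr => j _; rewrite mxE mulrDl. Qed.

Lemma dotvZl k a v : dotv (k *: a) v = k * dotv a v.
Proof. by rewrite /dotv mulr_sumr; apply: eq_bigr => j _; rewrite mxE mulrA. Qed.

Lemma dotvNl a v : dotv (- a) v = - dotv a v.
Proof. by rewrite -scaleN1r dotvZl mulN1r. Qed.

Lemma dotvBl a b v : dotv (a - b) v = dotv a v - dotv b v.
Proof. by rewrite dotvDl dotvNl. Qed.

Lemma dotvDr a b v : dotv v (a + b) = dotv v a + dotv v b.
Proof. by rewrite dotvC dotvDl !(dotvC v). Qed.

Lemma dotvZr k a v : dotv v (k *: a) = k * dotv v a.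
Proof. by rewrite dotvC dotvZl dotvC. Qed.

Lemma dotvNr a v : dotv v (- a) = - dotv v a.
Proof. by rewrite dotvC dotvNl dotvC. Qed.

Lemma dotvBr a b v : dotv v (a - b) = dotv v a - dotv v b.
Proof. by rewrite dotvDr dotvNr. Qed.

Lemma dotv_ge0 a : 0 <= dotv a a.
Proof. by apply: sumr_ge0 => j _; rewrite -expr2 sqr_ge0. Qed.

Lemma dotv_eq0 a : dotv a a = 0 -> a = 0.
Proof.
move=> /eqP; rewrite psumr_eq0; last by move=> j _; rewrite -expr2 sqr_ge0.
move=> /allP H; apply/rowP => j; rewrite mxE.
have := H j (mem_index_enum j); rewrite implyTb -expr2 sqrf_eq0.
by move/eqP.
Qed.

Lemma enorm_ge0 a : 0 <= enorm a.
Proof. exact: sqrtr_ge0. Qed.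

Lemma enorm_sq a : enorm a ^+ 2 = dotv a a.
Proof. by rewrite /enorm sqr_sqrtr // dotv_ge0. Qed.

Lemma enorm_eq0 a : enorm a = 0 -> a = 0.
Proof. by move=> h; apply: dotv_eq0; rewrite -enorm_sq h expr0n. Qed.

Lemma sq_le_sqrt (x y : R) : 0 <= y -> x ^+ 2 <= y ^+ 2 -> x <= y.
Proof.
move=> y0 h; have [x0|x0] := lerP x 0; first exact: le_trans x0 y0.
by rewrite -(ler_pXn2r (n:=2)) // ?nnegrE // ltW.
Qed.

Lemma CS a b : dotv a b <= enorm a * enorm b.
Proof.
have [C0|Cn0] := eqVneq (dotv b b) 0.
  by rewrite (dotv_eq0 _ C0) /dotv big1 ?mulr_ge0 ?enorm_ge0 // => j _; rewrite mxE mulr0.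
have Cp : 0 < dotv b b by rewrite lt_def Cn0 dotv_ge0.
apply: sq_le_sqrt; first by rewrite mulr_ge0 ?enorm_ge0.
rewrite exprMn !enorm_sq.
have := dotv_ge0 (dotv b b *: a - dotv a b *: b).
rewrite !(dotvBl, dotvBr, dotvZl, dotvZr) (dotvC b a).
set A := dotv a a; set B := dotv a b; set C := dotv b b => h.
have : 0 <= C * (A * C - B ^+ 2) by move: h; congr (_ <= _); ring.
by rewrite pmulr_rge0 // subr_ge0 mulrC.
Qed.

Lemma enormD a b : enorm (a + b) <= enorm a + enorm b.
Proof.
apply: sq_le_sqrt; first by rewrite addr_ge0 ?enorm_ge0.
rewrite enorm_sq sqrrD !enorm_sq !(dotvDl, dotvDr) (dotvC b a).
have := CS a b; lra.
Qed.

Lemma enormZ k a : enorm (k *: a) = `|k| * enorm a.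
Proof.
rewrite /enorm dotvZl dotvZr mulrA -expr2 sqrtrM ?sqr_ge0 //.
by rewrite sqrtr_sqr.
Qed.

Lemma enormN a : enorm (- a) = enorm a.
Proof. by rewrite -scaleN1r enormZ normrN normr1 mul1r. Qed.

Lemma enormB a b : enorm (a - b) = enorm (b - a).
Proof. by rewrite -enormN opprB. Qed.

Lemma enorm_le_mx a : enorm a <= n%:R * `|a|.
Proof.
apply: sq_le_sqrt; first by rewrite mulr_ge0.
rewrite enorm_sq /dotv.
have h j : a 0 j * a 0 j <= `|a| ^+ 2.
  rewrite -expr2 -real_normK ?num_real //; apply: lerXn2r; rewrite ?nnegrE //.
  rewrite [leRHS]/Num.Def.normr/= mx_normrE.
  apply: le_trans; last exact: (le_bigmax _ _ (0, j)).
  by [].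
apply: (le_trans (ler_sum _ (fun j _ => h j))).
rewrite sumr_const card_ord exprMn -[_ *+ n]mulr_natl.
apply: ler_wpM2r; first exact: exprn_ge0.
rewrite -natrX ler_nat; case: (n) => // m.
by rewrite expnS leq_pmulr.
Qed.

Lemma grad_dot (f : 'rV[R]_n -> R) p v : dotv (grad f p) v = 'd f p v.
Proof.
rewrite {2}(row_sum_delta v) linear_sum /dotv; apply: eq_bigr => j _.
by rewrite linearZ /= mxE mulrC.
Qed.

End Aux.



Section Desc.
Variable R : realType.
Variable n : nat.

Lemma line_derive (f : 'rV[R]_n -> R) (x d : 'rV[R]_n) (t : R) :
  (forall p, differentiable f p) ->
  is_derive t (1:R) (fun s : R => f (x + s *: d)) (dotv (grad f (x + t *: d)) d).
Proof.
move=> df.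
have eg : (fun s : R => x + s *: d) = cst x + ( *:%R^~ d) by apply: funext.
have isg : is_diff t (fun s : R => x + s *: d) (0 + ( *:%R^~ d)).
  by rewrite eg; apply: is_diffD.
have [dg dgval] := isg.
have dgv : 'd (fun s : R => x + s *: d) t 1 = d.
  by rewrite dgval /= add0r scale1r.
have -> : (fun s : R => f (x + s *: d)) = f \o (fun s : R => x + s *: d) by [].
apply: DeriveDef; first exact/diff_derivable/differentiable_comp.
rewrite deriveE; last exact/differentiable_comp.
by rewrite diff_comp //= dgv grad_dot.
Qed.



End Desc.

Section Desc2.
Variable R : realType.
Variable n : nat.

Lemma descent (f : 'rV[R]_n -> R) (Lc : R) :
  (forall p, differentiable f p) ->
  (forall a b, enorm (grad f a - grad f b) <= Lc * enorm (a - b)) ->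
  forall x d, f (x + d) <= f x + dotv (grad f x) d + Lc / 2 * enorm d ^+ 2.
Proof.
move=> df hL x d.
pose phi := fun s : R => f (x + s *: d).
pose k := dotv (grad f x) d.
pose c := Lc / 2 * enorm d ^+ 2.
pose P : {poly R} := k *: 'X + c *: 'X^2.
have hP s : P.[s] = k * s + c * s ^+ 2 by rewrite /P !hornerE.
have hP' s : P^`().[s] = k + c * (2 * s).
  rewrite /P derivD !derivZ derivX derivXn !hornerE /=; ring.
pose psi := (phi - horner P : R -> R).
have hpsi s : is_derive s (1:R) psi (dotv (grad f (x + s *: d)) d - P^`().[s]).
  by apply: is_deriveB; exact: line_derive.
have cpsi : {within `[0, 1], continuous psi}.
  apply: continuous_subspaceT => s.
  apply: differentiable_continuous; apply/derivable1_diffP.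
  by have [] := hpsi s.
have [t t01 ht] := MVT ltr01 (fun s _ => hpsi s) cpsi.
have e s : psi s = f (x + s *: d) - P.[s] by [].
move: ht; rewrite !e !hP hP' scale1r scale0r addr0 expr1n expr0n /= !mulr0 => ht.
have t0 : 0 <= t by move: t01; rewrite in_itv /= => /andP[/ltW].
have key : dotv (grad f (x + t *: d)) d - k <= Lc * (t * enorm d ^+ 2).
  rewrite /k -dotvBl; apply: le_trans; first exact: CS.
  apply: (@le_trans _ _ (Lc * enorm (x + t *: d - x) * enorm d)).
    by apply: ler_wpM2r; [exact: enorm_ge0 | exact: hL].
  by rewrite addrC addKr enormZ ger0_norm // expr2 !mulrA.
have : f (x + d) - (k + c) - f x = dotv (grad f (x + t *: d)) d - k - c * (2 * t).
  transitivity (f (x + d) - (k * 1 + c * 1) - (f x - (0 + 0))); first ring.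
  rewrite ht; ring.
move=> h2.
have h3 : f (x + d) = f x + k + c + (dotv (grad f (x + t *: d)) d - k - c * (2 * t)).
  rewrite -h2; ring.
suff H : f x + k + c + (dotv (grad f (x + t *: d)) d - k - c * (2 * t)) <= f x + k + c.
  by rewrite -h3 in H; move: H; rewrite /k /c.
rewrite -[leRHS]addr0 lerD2l subr_le0.
apply: (le_trans key); rewrite /c le_eqVlt; apply/orP; left; by apply/eqP; field.
Qed.

End Desc2.



Section Lim.
Variable R : realType.
Variable n : nat.

Lemma enorm0 : enorm (0 : 'rV[R]_n) = 0.
Proof. by rewrite /enorm /dotv big1 ?sqrtr0 // => j _; rewrite mxE mul0r. Qed.

Lemma limpt_stationary (f : 'rV[R]_n -> R) (grd : 'rV[R]_n -> 'rV[R]_n)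
  (th : nat -> 'rV[R]_n) (eps : nat -> R) (Lc c s : R) (R1 : nat) (p : 'rV[R]_n) :
  0 <= Lc -> 0 < c -> 0 <= s ->
  (forall y, 0 <= f y) ->
  (forall a b, enorm (grd a - grd b) <= Lc * enorm (a - b)) ->
  (forall r, 0 <= eps r) ->
  (forall r, (R1 <= r)%N ->
     f (th r.+1) <= f (th r) - c * eps r * enorm (grd (th r)) ^+ 2) ->
  (forall r, enorm (th r.+1 - th r) <= eps r * s * enorm (grd (th r))) ->
  (forall M r, exists d, M < \sum_(r <= k < r + d) eps k) ->
  (forall rho, 0 < rho -> forall R0, exists2 r, (R0 <= r)%N & enorm (th r - p) < rho) ->
  grd p = 0.
Proof.
move=> Lc0 c0 s0 f0 hL eps0 hdesc hstep hdiv hclus.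
apply: enorm_eq0; set a := enorm (grd p).
apply/eqP; rewrite eq_le enorm_ge0 andbT leNgt; apply/negP => apos.
pose F r := f (th r).
pose G r := enorm (grd (th r)).
pose rho := a / (2 * (Lc + 1)).
have rho0 : 0 < rho by rewrite divr_gt0 // mulr_gt0 // ltr_wpDl.
have hball y : enorm (y - p) <= rho -> a / 2 <= enorm (grd y).
  move=> hy.
  have h1 : a <= enorm (grd p - grd y) + enorm (grd y).
    by rewrite /a -{1}(subrK (grd y) (grd p)); exact: enormD.
  have h2 : enorm (grd p - grd y) <= Lc * rho.
    apply: (le_trans (hL _ _)); rewrite enormB; exact: ler_wpM2l.
  have h3 : Lc * rho <= a / 2.
    have -> : a / 2 = (Lc + 1) * rho by rewrite /rho; field; lra.
    by apply: ler_wpM2r; [exact: ltW | lra].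
  lra.
have mono r k : (R1 <= r)%N -> F (r + k)%N <= F r.
  move=> hr; elim: k => [|k IH]; first by rewrite addn0.
  apply: le_trans IH; rewrite addnS.
  apply: (le_trans (hdesc _ (leq_trans hr (leq_addr _ _)))).
  rewrite gerBl; apply: mulr_ge0; [apply: mulr_ge0 => //; exact: ltW | exact: sqr_ge0].
pose eta := c * a * rho / (4 * (s + 1)).
have eta0 : 0 < eta.
  apply: divr_gt0; [apply: mulr_gt0 => //; exact: mulr_gt0 | lra].
have [r0 hr0 Hr0] : exists2 r0, (R1 <= r0)%N & forall k, F r0 - eta < F (r0 + k)%N.
  apply: contrapT => Hn.
  have Hn' r1 : (R1 <= r1)%N -> exists k, F (r1 + k)%N <= F r1 - eta.
    move=> h1; apply: contrapT => Hk; apply: Hn; exists r1 => // k.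
    rewrite ltNge; apply/negP => hle; apply: Hk; by exists k.
  have Hm m : exists2 r1, (R1 <= r1)%N & F r1 <= F R1 - m%:R * eta.
    elim: m => [|m [r1 h1 IH]]; first by exists R1 => //; rewrite mul0r subr0.
    have [k hk] := Hn' r1 h1.
    exists (r1 + k)%N; first exact: leq_trans h1 (leq_addr _ _).
    apply: (le_trans hk); rewrite -natr1 mulrDl mul1r; lra.
  have Fb : 0 <= F R1 / eta by rewrite divr_ge0 ?f0 // ltW.
  have [r1 _ h] := Hm (Num.Def.archi_bound (F R1 / eta)).
  have := archi_boundP Fb; rewrite ltr_pdivrMr // => hb.
  have := f0 (th r1); rewrite -/(F r1); lra.
have [r hr hrp] := hclus (rho / 2) (divr_gt0 rho0 (ltr0Sn _ 1)) r0.
have hR1r : (R1 <= r)%N := leq_trans hr0 hr.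
have tail k : F r - F (r + k)%N < eta.
  have e1 : F r <= F r0 by rewrite -(subnKC hr); exact: mono.
  have := Hr0 (r - r0 + k)%N; rewrite addnA subnKC //; lra.
pose K := 2 * s / (c * a).
have K0 : 0 <= K by rewrite /K divr_ge0 ?mulr_ge0 // ltW // mulr_gt0.
have Keta : K * eta <= rho / 2.
  have -> : K * eta = rho / 2 * (s / (s + 1)) by rewrite /K /eta; field; lra.
  apply: ler_piMr; first by apply: ltW; rewrite divr_gt0.
  rewrite ler_pdivrMr; lra.
have claim k : (enorm (th (r + k)%N - p) <= rho) /\ (enorm (th (r + k)%N - th r) <= K * (F r - F (r + k)%N)).
  elim: k => [|k [IH1 IH2]].
    rewrite addn0 !subrr enorm0 mulr0; split; [apply: ltW; lra | done].
  set q := (r + k)%N.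
  have Gq : a / 2 <= G q := hball _ IH1.
  have dq := hdesc q (leq_trans hR1r (leq_addr _ _)).
  have st : enorm (th q.+1 - th q) <= K * (F q - F q.+1).
    apply: (le_trans (hstep q)).
    have e2 : K * (c * eps q * G q ^+ 2) = eps q * s * G q * (2 * G q / a).
      by rewrite /K; field; apply/andP; split; apply: lt0r_neq0.
    apply: (@le_trans _ _ (K * (c * eps q * G q ^+ 2))); last first.
      by apply: ler_wpM2l => //; rewrite /F /G; lra.
    rewrite e2 -{1}(mulr1 (eps q * s * G q)); apply: ler_wpM2l.
      by rewrite mulr_ge0 ?enorm_ge0 // mulr_ge0.
    by rewrite ler_pdivlMr // mul1r; lra.
  have tri : enorm (th q.+1 - th r) <= K * (F r - F q.+1).
    apply: (le_trans (y := enorm (th q.+1 - th q) + enorm (th q - th r))).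
      by rewrite -{1}(subrK (th q) (th q.+1)) -addrA; exact: enormD.
    have : K * (F r - F q.+1) = K * (F q - F q.+1) + K * (F r - F q) by ring.
    move=> ->; exact: lerD.
  rewrite addnS; split => //.
  apply: (le_trans (y := enorm (th q.+1 - th r) + enorm (th r - p))).
    by rewrite -{1}(subrK (th r) (th q.+1)) -addrA; exact: enormD.
  have := tail k.+1; rewrite addnS -/q => tk.
  have : K * (F r - F q.+1) <= K * eta by apply: ler_wpM2l => //; exact: ltW.
  lra.
pose b := c * (a / 2) ^+ 2.
have b0 : 0 < b by rewrite /b mulr_gt0 // exprn_gt0 // divr_gt0.
have sum d : b * \sum_(r <= k < r + d) eps k <= F r - F (r + d)%N.
  elim: d => [|d IH]; first by rewrite addn0 big_geq // mulr0 subrr.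
  rewrite addnS big_nat_recr /=; last exact: leq_addr.
  set q := (r + d)%N.
  have Gq : a / 2 <= G q by apply: hball; have [] := claim d.
  have dq := hdesc q (leq_trans hR1r (leq_addr _ _)).
  have : b * eps q <= c * eps q * G q ^+ 2.
    rewrite /b mulrAC; apply: ler_wpM2l; first by apply: mulr_ge0 => //; exact: ltW.
    by apply: lerXn2r; rewrite ?nnegrE ?enorm_ge0 // divr_ge0 // ltW.
  rewrite /F /G in IH dq * => h; rewrite mulrDr; lra.
have [d hd] := hdiv (F r / b) r.
have := sum d; have := f0 (th (r + d)%N); rewrite -/(F _) => h1 h2.
move: hd; rewrite ltr_pdivrMr // mulrC; lra.
Qed.

End Lim.



Section Loss.
Variables (R : realType) (N Dx Du Dth : nat).
Variables (xs : 'I_N -> 'rV[R]_Dx) (us : 'I_N -> 'rV[R]_Du).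
Variable (uhat : 'rV[R]_Dth -> 'rV[R]_Dx -> 'rV[R]_Du).
Variable (ell : 'rV[R]_Du -> 'rV[R]_Du -> R).
Hypothesis huhat : forall i (th : 'rV[R]_Dth), differentiable (fun th' => uhat th' (xs i)) th.
Hypothesis hell : forall i q, differentiable (fun q' => ell q' (us i)) q.

Let g i := (fun q' => ell q' (us i)) \o (fun th' => uhat th' (xs i)).

Lemma eL : emp_loss xs us uhat ell = N%:R^-1 *: \sum_(i < N) g i.
Proof.
apply: funext => t; rewrite /emp_loss /= fct_sumE.
by [].
Qed.

Lemma dL p : differentiable (emp_loss xs us uhat ell) p.
Proof.
rewrite eL; apply: differentiableZ; apply: differentiable_sum => i.
exact: differentiable_comp.
Qed.

Lemma dLv p v : 'd (emp_loss xs us uhat ell) p v =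
  N%:R^-1 * \sum_(i < N) 'd (fun q' => ell q' (us i)) (uhat p (xs i))
                         ('d (fun th' => uhat th' (xs i)) p v).
Proof.
rewrite -deriveE; last exact: dL.
rewrite eL deriveZ; last first.
  apply: derivable_sum => i; apply: diff_derivable; exact: differentiable_comp.
rewrite derive_sum; last first.
  move=> i; apply: diff_derivable; exact: differentiable_comp.
congr (_ * _); apply: eq_bigr => i _.
by rewrite deriveE ?diff_comp //; exact: differentiable_comp.
Qed.

Lemma coord_uX i j : (fun t => uX xs uhat t 0 (mxvec_index i j)) =
  (fun M : 'rV[R]_Du => M 0 j) \o (fun th' => uhat th' (xs i)).
Proof. by apply: funext => t; rewrite /uX /= mxvecE mxE. Qed.

Lemma duX p : differentiable (uX xs uhat) p.
Proof.
have -> : uX xs uhat = \sum_(k < N * Du) (fun t => uX xs uhat t 0 k *: 'e_k).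
  by apply: funext => t; rewrite fct_sumE; exact: row_sum_delta.
apply: differentiable_sum => k; apply: differentiableZl.
case/mxvec_indexP: k => i j; rewrite coord_uX.
apply: differentiable_comp => //; exact: differentiable_coord.
Qed.

Lemma uX_comp p v i j : ('d (uX xs uhat) p v) 0 (mxvec_index i j) =
   ('d (fun th' => uhat th' (xs i)) p v) 0 j.
Proof.
rewrite -!deriveE //; last exact: duX.
rewrite derive_mx; last exact/diff_derivable/duX.
rewrite derive_mx; last exact/diff_derivable.
by rewrite !mxE coord_uX.
Qed.

Lemma uX_surj p : \rank (jac (uX xs uhat) p) = (N * Du)%N ->
  forall y : 'rV_(N * Du), exists v, 'd (uX xs uhat) p v = y.
Proof.
move=> hr y.
have hf : row_full (jacobian (uX xs uhat) p) by rewrite /row_full -mxrank_tr hr.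
have /submxP [v ->] := submx_full y hf.
by exists v; rewrite /jacobian mul_rV_lin1.
Qed.

Lemma stat_min p : \rank (jac (uX xs uhat) p) = (N * Du)%N ->
  grad (emp_loss xs us uhat ell) p = 0 ->
  (forall i q, grad (fun q' => ell q' (us i)) q = 0 ->
      forall q', ell q (us i) <= ell q' (us i)) ->
  forall p', emp_loss xs us uhat ell p <= emp_loss xs us uhat ell p'.
Proof.
move=> hr hg hst p'; rewrite /emp_loss.
apply: ler_wpM2l; first by rewrite invr_ge0.
apply: ler_sum => i0 _; apply: hst.
suff hw : forall w, 'd (fun q' => ell q' (us i0)) (uhat p (xs i0)) w = 0.
  by apply/rowP => j; rewrite !mxE hw.
move=> w.
have [v hv] := uX_surj p hr (mxvec (\matrix_(i, j) if i == i0 then w 0 j else 0)).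
have hvi i : 'd (fun th' => uhat th' (xs i)) p v = if i == i0 then w else 0.
  apply/rowP => j; rewrite -uX_comp hv mxvecE mxE.
  by case: eqP => _ //; rewrite mxE.
have := @grad_dot _ _ (emp_loss xs us uhat ell) p v; rewrite hg (dLv p v).
have d0 : dotv (0 : 'rV[R]_Dth) v = 0 by rewrite /dotv big1 // => j _; rewrite mxE mul0r.
rewrite d0.
rewrite (bigD1 i0) //= big1; last first.
  by move=> i /negPf ne; rewrite hvi ne linear0.
rewrite hvi eqxx addr0.
have N0 : N%:R^-1 != 0 :> R.
  by rewrite invr_eq0 pnatr_eq0 -lt0n; apply: (leq_ltn_trans _ (ltn_ord i0)).
move=> /esym/eqP; rewrite mulf_eq0 (negPf N0) /=.
by move/eqP.
Qed.

End Loss.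



Lemma step_desc (R : realType) (F0 F1 D E G2 e Lc cbar cund c : R) :
  F1 <= F0 - e * D + Lc / 2 * (e ^+ 2 * E) ->
  cund * G2 <= D -> E <= cbar * G2 -> 0 <= e -> 0 <= Lc -> 0 <= G2 ->
  e * (Lc * cbar) <= 2 * (cund - c) -> F1 <= F0 - c * e * G2.
Proof.
move=> h1 h2 h3 e0 L0 G0 h4.
have a1 : e * (cund * G2) <= e * D by exact: ler_wpM2l.
have a2 : Lc / 2 * (e ^+ 2 * E) <= Lc / 2 * (e ^+ 2 * (cbar * G2)).
  apply: ler_wpM2l; first lra.
  by apply: ler_wpM2l => //; exact: sqr_ge0.
have a3 : (e * G2 / 2) * (e * (Lc * cbar)) <= (e * G2 / 2) * (2 * (cund - c)).
  by apply: ler_wpM2l => //; apply: mulr_ge0 => //; exact: mulr_ge0.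
have e1 : Lc / 2 * (e ^+ 2 * (cbar * G2)) = (e * G2 / 2) * (e * (Lc * cbar)) by ring.
have e2 : (e * G2 / 2) * (2 * (cund - c)) = e * (cund * G2) - c * e * G2 by field.
lra.
Qed.

Theorem theorem2 (R : realType) (N Dx Du Dth : nat)
  (X : set 'rV[R]_Dx) (U : set 'rV[R]_Du)
  (xs : 'I_N -> 'rV[R]_Dx) (us : 'I_N -> 'rV[R]_Du)
  (hxs : forall i, X (xs i)) (hus : forall i, U (us i))
  (uhat : 'rV[R]_Dth -> 'rV[R]_Dx -> 'rV[R]_Du)
  (huhat : forall i (th : 'rV[R]_Dth), differentiable (fun th' => uhat th' (xs i)) th)
  (ell : 'rV[R]_Du -> 'rV[R]_Du -> R)
  (hell0 : forall q u, U u -> 0 <= ell q u)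
  (hstat : optimal_stationarity U ell)
  (Lc : R) (hLc : 0 <= Lc)
  (hLip : forall th th' : 'rV[R]_Dth,
     enorm (grad (emp_loss xs us uhat ell) th - grad (emp_loss xs us uhat ell) th')
       <= Lc * enorm (th - th'))
  (theta : nat -> 'rV[R]_Dth) (eps : nat -> R) (g : nat -> 'rV[R]_Dth)
  (hstep : forall r, theta r.+1 = theta r - eps r *: g r)
  (cbar cund : R) (hcbar : 0 < cbar) (hcund : 0 < cund)
  (hdesc : forall r, cund * enorm (grad (emp_loss xs us uhat ell) (theta r)) ^+ 2
                      <= dotv (grad (emp_loss xs us uhat ell) (theta r)) (g r))
  (hbnd : forall r, enorm (g r) ^+ 2
                      <= cbar * enorm (grad (emp_loss xs us uhat ell) (theta r)) ^+ 2)
  (heps : (exists zeta : R, 0 < zeta /\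
             forall r, zeta <= eps r /\ eps r * (Lc * cbar) <= cund * (2 - zeta))
          \/ ((forall r, 0 < eps r) /\ eps @ \oo --> (0 : R) /\
              ([series eps k]_k @ \oo --> +oo)%R)) :
  forall th : 'rV[R]_Dth,
    cluster (theta @ \oo) th ->
    \rank (jac (uX xs uhat) th) = (N * Du)%N ->
    forall th' : 'rV[R]_Dth,
      emp_loss xs us uhat ell th <= emp_loss xs us uhat ell th'.
Proof.
move=> th hclus hrank th'.
have hLc2 := hLc.
set Lf := emp_loss xs us uhat ell.
have hell i q : differentiable (fun q' => ell q' (us i)) q := (hstat _ (hus i) q).1.
have dLf p : differentiable Lf p := @dL R N Dx Du Dth xs us uhat ell huhat hell p.
have f0 y : 0 <= Lf y.
  rewrite /Lf /emp_loss; apply: mulr_ge0; first by rewrite invr_ge0.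
  by apply: sumr_ge0 => i _; apply: hell0.
set s := Num.sqrt cbar.
have s0 : 0 <= s := sqrtr_ge0 _.
have eps_ge0 : forall r, 0 <= eps r.
  case: heps => [[z [z0 hz]] r|[hp _] r]; last exact: ltW.
  by have [h _] := hz r; apply: le_trans h; exact: ltW.
have hstep' r : enorm (theta r.+1 - theta r) <= eps r * s * enorm (grad Lf (theta r)).
  rewrite hstep addrAC subrr add0r enormN enormZ ger0_norm // -mulrA.
  apply: ler_wpM2l => //; apply: sq_le_sqrt; first by apply: mulr_ge0 => //; exact: enorm_ge0.
  have -> : (s * enorm (grad Lf (theta r))) ^+ 2 = cbar * enorm (grad Lf (theta r)) ^+ 2.
    by rewrite exprMn /s sqr_sqrtr // ltW.
  exact: hbnd.
have gdesc r : Lf (theta r.+1) <= Lf (theta r) - eps r * dotv (grad Lf (theta r)) (g r)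
      + Lc / 2 * (eps r ^+ 2 * enorm (g r) ^+ 2).
  have := @descent R Dth Lf Lc dLf hLip (theta r) (- eps r *: g r).
  have e : theta r + (- eps r) *: g r = theta r.+1 by rewrite hstep scaleNr.
  rewrite e dotvZr enormZ normrN ger0_norm ?eps_ge0 //.
  by rewrite exprMn mulNr.
have [c [R1 [c0 hdesc2]]] : exists c, exists R1, 0 < c /\ forall r, (R1 <= r)%N ->
    Lf (theta r.+1) <= Lf (theta r) - c * eps r * enorm (grad Lf (theta r)) ^+ 2.
  case: heps => [[z [z0 hz]]|[hp [he0 _]]].
    exists (cund * z / 2), 0%N; split; first by rewrite divr_gt0 // mulr_gt0.
    move=> r _; apply: step_desc (gdesc r) (hdesc r) (hbnd r) (eps_ge0 r) hLc (sqr_ge0 _) _.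
    have [_ h] := hz r; lra.
  have ec : 0 < cund / (Lc * cbar + 1).
    by rewrite divr_gt0 // ltr_wpDl // mulr_ge0 // ltW.
  move/cvgrPdist_lt : he0 => /(_ _ ec) [R1 _ hR1].
  exists (cund / 2), R1; split; first by rewrite divr_gt0.
  move=> r hr; apply: step_desc (gdesc r) (hdesc r) (hbnd r) (eps_ge0 r) hLc (sqr_ge0 _) _.
  have := hR1 r hr; rewrite /= sub0r normrN ger0_norm ?eps_ge0 // => h.
  have hLc0 : 0 <= Lc * cbar := mulr_ge0 hLc2 (ltW hcbar).
  have : eps r * (Lc * cbar) <= cund / (Lc * cbar + 1) * (Lc * cbar).
    by apply: ler_wpM2r => //; exact: ltW.
  have : cund / (Lc * cbar + 1) * (Lc * cbar) <= cund.
    rewrite mulrAC ler_pdivrMr; last lra.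
    by apply: ler_wpM2l; [exact: ltW | lra].
  lra.
have hdiv : forall M r, exists d, M < \sum_(r <= k < r + d) eps k.
  case: heps => [[z [z0 hz]]|[hp [_ hser]]] M r.
    have hb := archi_boundP (divr_ge0 (normr_ge0 M) (ltW z0)).
    rewrite ltr_pdivrMr // in hb.
    exists (Num.bound (`|M| / z)).
    have : \sum_(r <= k < r + Num.bound (`|M| / z)) z
             <= \sum_(r <= k < r + Num.bound (`|M| / z)) eps k.
      by apply: ler_sum => k _; have [] := hz k.
    rewrite sumr_const_nat addKn -mulr_natl.
    have := ler_norm M; lra.
  move/cvgryPgt : hser => /(_ (M + [series eps k]_k r)) [N0 _ hN].
  pose m := maxn N0 r.
  have := hN m (leq_maxl _ _); rewrite /= /series /= => H.
  exists (m - r)%N; rewrite subnKC ?leq_maxr //.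
  move: H; rewrite (@big_cat_nat _ _ _ r 0 m) ?leq_maxr //=; lra.
have hcl : forall rho, 0 < rho -> forall R0, exists2 r, (R0 <= r)%N & enorm (theta r - th) < rho.
  move=> rho rho0 R0.
  have del0 : 0 < rho / (Dth%:R + 1) by rewrite divr_gt0 // ltr_wpDl.
  have [||y [[r hr ->] hb]] := hclus [set y | exists2 r, (R0 <= r)%N & y = theta r]
      (ball th (rho / (Dth%:R + 1))).
  - by exists R0 => // m hm; exists m.
  - exact: nbhsx_ballx.
  exists r => //.
  move: hb; rewrite -ball_normE /= distrC => hb.
  apply: le_lt_trans; first exact: enorm_le_mx.
  apply: (@le_lt_trans _ _ (Dth%:R * (rho / (Dth%:R + 1)))).
    by apply: ler_wpM2l => //; exact: ltW.
  rewrite mulrC -mulrA gtr_pMr // mulrC ltr_pdivrMr; have := ler0n R Dth; lra.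
have hgrad : grad Lf th = 0.
  apply: (@limpt_stationary R Dth Lf (grad Lf) theta eps Lc c s R1 th) => //.
apply: (@stat_min R N Dx Du Dth xs us uhat ell huhat hell th hrank hgrad) => //.
move=> i q hq q'; exact: (hstat _ (hus i) q).2.
Qed.
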